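(* On the event $\mathbb{G}_1$, for all episodes $k$, steps $h\in[H]$, states $s$, $B\in[\ell_h]$ and lookahead information $I$, it holds that $\mathfrak{Q}^*_h(s,B;I,V^*_{h+B})\le\mathfrak{Q}^*_h(s,B;I,\bar V^k_{h+B})$; in particular $V^*_h(s)\le\bar V^k_h(s)$.
   Context: Setting: episodic tabular MDP with $S$ states, horizon $H$, rewards in $[0,1]$, unknown distributions independent across time steps. Fix $\ell\ge1$, $\ell_h=\min\{\ell,H-h+1\}$. $I_{h,B}(s)$ is $B$-step lookahead information from $s$ at step $h$ (realized rewards and next states of all state-action pairs reachable from $s$ at steps $h,\dots,h+B-1$), with distribution $\mathcal{I}_{h,B}(s)$. For deterministic Markov $\phi$, $\mathfrak{R}_{t\mid h}(s,\phi,I)$, $\mathfrak{s}_{t\mid h}(s,\phi,I)$ are the reward/state at step $t$ from $s_h=s$ following $\phi$ under $I$; $\mathfrak{Q}^*_h(s,B;I,V)=\max_\phi\{\sum_{t=h}^{h+B-1}\mathfrak{R}_{t\mid h}(s,\phi,I)+V(\mathfrak{s}_{h+B\mid h}(s,\phi,I))\}$. $V^*_h$ is the optimal value of adaptive batching policies, with $V^*_{H+1}\equiv0$, $V^*_h(s)=\max_{B\in[\ell_h]}Q^*_h(s,B)$, $Q^*_h(s,B)=\mathbb{E}_{I\sim\mathcal{I}_{h,B}(s)}[\mathfrak{Q}^*_h(s,B;I,V^*_{h+B})]$, and $\mathrm{Var}^*_h(s,B)$ the variance of $\mathfrak{Q}^*_h(s,B;I,V^*_{h+B})$ under $I\sim\mathcal{I}_{h,B}(s)$.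 AL-UCB notation: $n^k_h(s,B)$ is the number of episodes before $k$ in which a batch with horizon $B$ started at step $h$ in state $s$; $\widehat{\mathbb{E}}^k_{h,s,B}[f(I)]$ is the average of $f$ over the lookahead observed in those episodes (0 if none); $\widehat{\mathrm{Var}}^k_h(s,B;V)$ the corresponding empirical variance of $\mathfrak{Q}^*_h(s,B;I,V)$; $L^k_\delta=\ln\frac{18SH\ell k^3(k+1)}{\delta}$. The optimistic values are $\bar V^k_{H+1}\equiv0$, $b^k_h(s,B)=\sqrt{\frac{8\widehat{\mathrm{Var}}^k_h(s,B;\bar V^k_{h+B})L^k_\delta}{n^k_h(s,B)\vee1}}+\frac{11HL^k_\delta}{n^k_h(s,B)\vee1}$, $\bar Q^k_h(s,B)=\min\{\widehat{\mathbb{E}}^k_{h,s,B}[\mathfrak{Q}^*_h(s,B;I,\bar V^k_{h+B})]+b^k_h(s,B),H-h+1\}$, $\bar V^k_h(s)=\max_{B\in[\ell_h]}\bar Q^k_h(s,B)$. The event $\mathbb{G}_1$ is the intersection over all $k\ge1$ of: (i) for all $s,h,B$: $|Q^*_h(s,B)-\widehat{\mathbb{E}}^k_{h,s,B}[\mathfrak{Q}^*_h(s,B;I,V^*_{h+B})]|\le\sqrt{2\mathrm{Var}^*_h(s,B)L^k_\delta/(n^k_h(s,B)\vee1)}+HL^k_\delta/(n^k_h(s,B)\vee1)$; (ii) for all $s,h,B$: $|\sqrt{\widehat{\mathrm{Var}}^k_h(s,B;V^*_{h+B})}-\sqrt{\mathrm{Var}^*_h(s,B)}|\le4H\sqrt{L^k_\delta/(n^k_h(s,B)\vee1)}$;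 (iii) for all $s,h,B$ and all $V$ with $V^*_{h+B}\le V\le H$ componentwise: $\widehat{\mathbb{E}}^k_{h,s,B}[\mathfrak{Q}^*_h(s,B;I,V)-\mathfrak{Q}^*_h(s,B;I,V^*_{h+B})]\le(1+\frac{1}{2H})\mathbb{E}_{I\sim\mathcal{I}_{h,B}(s)}[\mathfrak{Q}^*_h(s,B;I,V)-\mathfrak{Q}^*_h(s,B;I,V^*_{h+B})]+\frac{4H^2SL^k_\delta}{n^k_h(s,B)\vee1}$. *)

(* Defs.v *)
From HB Require Import structures.
From mathcomp Require Import all_boot all_order all_algebra.
From mathcomp Require Import all_classical all_reals all_analysis.
Set Implicit Arguments. Unset Strict Implicit. Unset Printing Implicit Defensive.
Import Order.TTheory GRing.Theory Num.Theory.
Local Open Scope ring_scope.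

Section ALUCB.
Variable R : realType.
Variables S A : finType.
(* a0 : some action (the action set is nonempty); only used as the neutral
   element of a max over the (nonempty) finite set of batch policies. *)
Variable a0 : A.
Variable d : measure_display.
Variable Info : measurableType d.
(* rew I t x a = realized reward of (x,a) at step t under I;
   nxt I t x a = realized next state (state at step t+1) of (x,a) at step t. *)
Variable rew : Info -> nat -> S -> A -> R.
Variable nxt : Info -> nat -> S -> A -> S.

(* Following a batch policy, given as the list of its Markov decision rules
   for steps t, t+1, ..., from state x at step t under lookahead I:
   returns (sum of collected rewards, state reached at the end). *)
Fixpoint run (I : Info) (pol : seq {ffun S -> A}) (t : nat) (x : S) : R * S :=
  match pol with
  | [::] => (0, x)
  | f :: pol' =>
      let a := f x in
      let p := run I pol' t.+1 (nxt I t x a) in (rew I t x a + p.1, p.2)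
  end.

Definition batch_value (I : Info) (h : nat) (s : S) (pol : seq {ffun S -> A})
  (V : S -> R) : R :=
  let p := run I pol h s in p.1 + V p.2.

Definition frakQ (h : nat) (s : S) (B : nat) (I : Info) (V : S -> R) : R :=
  \big[Num.max/batch_value I h s (nseq B [ffun=> a0]) V]_(phi : B.-tuple {ffun S -> A})
    batch_value I h s phi V.

(* max_{B in [n]} f B  (n >= 1 in all uses) *)
Definition maxB (n : nat) (f : nat -> R) : R :=
  \big[Num.max/f 1%N]_(1 <= B < n.+1) f B.

Definition ellh (H ell h : nat) : nat := minn ell (H.+1 - h).

(* Backward recursion: W_{H+1} = 0, W_h(s) = step h (fun B => W_{h+B}) s.
   vtab m = [:: W_{H+1-m}; ...; W_{H+1}]. *)
Fixpoint vtab (H : nat) (step : nat -> (nat -> S -> R) -> S -> R) (m : nat)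
  : seq (S -> R) :=
  match m with
  | 0 => [:: fun _ => 0]
  | m'.+1 =>
      let tab := vtab H step m' in
      step (H - m')%N (fun B => nth (fun _ => 0) tab B.-1) :: tab
  end.

Definition backward (H : nat) (step : nat -> (nat -> S -> R) -> S -> R)
  (h : nat) : S -> R :=
  nth (fun _ => 0) (vtab H step (H.+1 - h)) 0.

Definition Expect (P : probability Info R) (f : Info -> R) : R :=
  fine (\int[P]_x (f x)%:E).
Definition Variance (P : probability Info R) (f : Info -> R) : R :=
  Expect P (fun x => (f x - Expect P f) ^+ 2).

(* Empirical mean / variance over observed samples (0 if none). *)
Definition emp_mean (xs : seq Info) (f : Info -> R) : R :=
  (\sum_(x <- xs) f x) / (maxn (size xs) 1)%:R.
Definition emp_var (xs : seq Info) (f : Info -> R) : R :=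
  emp_mean xs (fun x => (f x - emp_mean xs f) ^+ 2).

Section Values.
Variables (H ell : nat).
(* P h s B = law I_{h,B}(s) of the B-step lookahead information from s at h *)
Variable P : nat -> S -> nat -> probability Info R.
(* samp k h s B = lookahead information observed in the episodes before k in
   which a batch of horizon B started at step h in state s;
   n^k_h(s,B) = size (samp k h s B). *)
Variable samp : nat -> nat -> S -> nat -> seq Info.
Variable delta : R.

Definition Vstar : nat -> S -> R :=
  backward H (fun h W s =>
    maxB (ellh H ell h) (fun B => Expect (P h s B) (fun I => frakQ h s B I (W B)))).

Definition Qstar (h : nat) (s : S) (B : nat) : R :=
  Expect (P h s B) (fun I => frakQ h s B I (Vstar (h + B))).

Definition Varstar (h : nat) (s : S) (B : nat) : R :=
  Variance (P h s B) (fun I => frakQ h s B I (Vstar (h + B))).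

Definition nvis (k h : nat) (s : S) (B : nat) : R :=
  (maxn (size (samp k h s B)) 1)%:R.

Definition Lk (k : nat) : R :=
  ln ((18 * #|S| * H * ell * k ^ 3 * k.+1)%:R / delta).

Definition bonus (k h : nat) (s : S) (B : nat) (V : S -> R) : R :=
  Num.sqrt (8 * emp_var (samp k h s B) (fun I => frakQ h s B I V) * Lk k
            / nvis k h s B)
  + 11 * H%:R * Lk k / nvis k h s B.

(* Qbar^k_h(s,B) computed with next-value function V (= Vbar^k_{h+B}) *)
Definition Qbar_with (k h : nat) (s : S) (B : nat) (V : S -> R) : R :=
  Num.min (emp_mean (samp k h s B) (fun I => frakQ h s B I V) + bonus k h s B V)
          (H.+1 - h)%:R.

Definition Vbar (k : nat) : nat -> S -> R :=
  backward H (fun h W s => maxB (ellh H ell h) (fun B => Qbar_with k h s B (W B))).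

Definition G1 : Prop :=
  forall k, (1 <= k)%N ->
  forall h (s : S) B, (1 <= h <= H)%N -> (1 <= B <= ellh H ell h)%N ->
  let xs := samp k h s B in
  let fQs := fun I => frakQ h s B I (Vstar (h + B)) in
  let n := nvis k h s B in
  [/\ `|Qstar h s B - emp_mean xs fQs|
        <= Num.sqrt (2 * Varstar h s B * Lk k / n) + H%:R * Lk k / n,
      `|Num.sqrt (emp_var xs fQs) - Num.sqrt (Varstar h s B)|
        <= 4 * H%:R * Num.sqrt (Lk k / n) &
      forall V : S -> R, (forall x, Vstar (h + B) x <= V x <= H%:R) ->
        emp_mean xs (fun I => frakQ h s B I V - fQs I)
          <= (1 + 1 / (2 * H%:R)) * Expect (P h s B) (fun I => frakQ h s B I V - fQs I)
             + 4 * H%:R ^+ 2 * #|S|%:R * Lk k / n].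

End Values.
End ALUCB.

(* Main.v *)
Require Import Defs.
From HB Require Import structures.
From mathcomp Require Import all_boot all_order all_algebra.
From mathcomp Require Import all_classical all_reals all_analysis.
From mathcomp Require Import lra ring zify.
Import Order.TTheory GRing.Theory Num.Theory.
Local Open Scope ring_scope.

Import HBNNSimple.

Lemma Expect_ge0 (R : realType) d (Info : measurableType d) (P : probability Info R) (f : Info -> R) :
  (forall x, 0 <= f x) -> 0 <= Expect P f.
Proof. move=> f0; apply: fine_ge0; apply: integral_ge0 => x _; rewrite lee_fin; exact: f0. Qed.

Lemma Expect_le (R : realType) d (Info : measurableType d) (P : probability Info R) (f : Info -> R) (c : R) :
  (forall x, 0 <= f x <= c) -> Expect P f <= c.
Proof.
move=> fc.
have c0 : 0 <= c by case/andP: (fc point) => /le_trans; apply.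
rewrite /Expect.
have h : (\int[P]_x (f x)%:E <= c%:E)%E.
  rewrite ge0_integralTE; last by move=> x; rewrite lee_fin; case/andP: (fc x).
  apply/ge_ereal_sup => _ [g /= gf <-].
  have E := integral_nnsfun P measurableT g. rewrite patch_setT in E. rewrite -E.
  rewrite (@le_trans _ _ (\int[P]_(x in setT) (cst c%:E x)))%E //.
    apply: ge0_le_integral => //.
    - by move=> x _; rewrite lee_fin; apply: fun_ge0.
    - by apply/measurable_realfun.measurable_EFinP.
    - move=> x _; rewrite /= ?lee_fin; have := gf x; rewrite lee_fin => /le_trans; apply; by case/andP: (fc x).
  rewrite integral_cst //. rewrite -[X in (_ <= X)%E]mule1. apply: lee_wpmul2l; [by rewrite lee_fin | exact: probability_le1].
have h0 : (0 <= \int[P]_(x in setT) (f x)%:E)%E by apply: integral_ge0 => x _; rewrite lee_fin; case/andP: (fc x).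
move: h h0; case: (\int[P]_(x in setT) (f x)%:E)%E => //= r; by rewrite !lee_fin.
Qed.

Section Gen.
Variable R : realType.

Lemma bmax_seq_le (I : eqType) (r : seq I) (P : pred I) (F : I -> R) x0 X :
  x0 <= X -> (forall i, i \in r -> P i -> F i <= X) -> \big[Num.max/x0]_(i <- r | P i) F i <= X.
Proof.
elim: r => [|a r IH] hx hF; first by rewrite big_nil.
rewrite big_cons; case: ifP => Pa.
  rewrite ge_max hF ?mem_head // IH // => i ir; apply: hF; by rewrite inE ir orbT.
by apply: IH => // i ir; apply: hF; by rewrite inE ir orbT.
Qed.

Lemma le_bmax_seq (I : eqType) (r : seq I) (P : pred I) (F : I -> R) x0 i :
  i \in r -> P i -> F i <= \big[Num.max/x0]_(j <- r | P j) F j.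
Proof.
elim: r => [|a r IH] //; rewrite inE big_cons => /orP[/eqP-> Pa|ir Pi].
  by rewrite Pa le_max lexx.
by case: ifP => _; rewrite ?le_max IH ?orbT.
Qed.

Lemma idx_le_bmax_seq (I : eqType) (r : seq I) (P : pred I) (F : I -> R) x0 :
  x0 <= \big[Num.max/x0]_(j <- r | P j) F j.
Proof.
elim: r => [|a r IH]; first by rewrite big_nil.
by rewrite big_cons; case: ifP => _; rewrite ?le_max IH ?orbT.
Qed.

Lemma bmax_le (I : finType) (F : I -> R) x0 X :
  x0 <= X -> (forall i, F i <= X) -> \big[Num.max/x0]_i F i <= X.
Proof. by move=> hx hF; apply: bmax_seq_le => // i _ _; apply: hF. Qed.

Lemma le_bmax (I : finType) (F : I -> R) x0 i : F i <= \big[Num.max/x0]_i F i.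
Proof. by apply: le_bmax_seq => //; rewrite mem_index_enum. Qed.

Lemma idx_le_bmax (I : finType) (F : I -> R) x0 : x0 <= \big[Num.max/x0]_i F i.
Proof. exact: idx_le_bmax_seq. Qed.

Lemma maxB_le n (f : nat -> R) X :
  (1 <= n)%N -> (forall B, (1 <= B <= n)%N -> f B <= X) -> maxB n f <= X.
Proof.
move=> n1 hf; rewrite /maxB; apply: bmax_seq_le.
- by apply: hf; rewrite leqnn n1.
- by move=> B; rewrite mem_index_iota => /andP[h1 h2] _; apply: hf; rewrite h1 -ltnS h2.
Qed.

Lemma le_maxB n (f : nat -> R) B :
  (1 <= B <= n)%N -> f B <= maxB n f.
Proof.
by move=> /andP[h1 h2]; rewrite /maxB; apply: le_bmax_seq => //; rewrite mem_index_iota h1 ltnS.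
Qed.

Lemma maxB_mono n (f g : nat -> R) :
  (1 <= n)%N -> (forall B, (1 <= B <= n)%N -> f B <= g B) -> maxB n f <= maxB n g.
Proof.
move=> n1 hfg; apply: maxB_le => // B hB.
by apply: le_trans (hfg B hB) _; apply: le_maxB.
Qed.

Lemma maxB_eq n (f g : nat -> R) :
  (1 <= n)%N -> (forall B, (1 <= B <= n)%N -> f B = g B) -> maxB n f = maxB n g.
Proof.
move=> n1 hfg; rewrite /maxB hfg ?leqnn ?n1 //.
apply: eq_big_nat => B /andP[h1 h2]; by apply: hfg; rewrite h1 -ltnS h2.
Qed.

Lemma nth_vtab (S : finType) H step m i : (i <= m)%N ->
  nth (fun _ : S => 0 : R) (vtab H step m) i = nth (fun _ => 0) (vtab H step (m - i)) 0.
Proof.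
elim: i m => [|i IH] [|m] //= him; by rewrite IH // subSS.
Qed.

Lemma backward_last (S : finType) H step : backward (R:=R) (S:=S) H step H.+1 = fun _ => 0.
Proof. by rewrite /backward subnn. Qed.

Lemma backward_unfold (S : finType) H step h : (1 <= h <= H)%N ->
  backward (R:=R) (S:=S) H step h =
  step h (fun B => nth (fun _ => 0) (vtab H step (H - h)) B.-1).
Proof.
move=> /andP[h1 h2]; rewrite /backward subSn // /=.
by rewrite subKn.
Qed.

Lemma backward_tab (S : finType) H step h B : (1 <= h <= H)%N -> (1 <= B <= H.+1 - h)%N ->
  nth (fun _ => 0) (vtab H step (H - h)) B.-1 = backward (R:=R) (S:=S) H step (h + B).
Proof.
move=> /andP[h1 h2] /andP[B1 B2]; rewrite nth_vtab; last by lia.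
rewrite /backward; congr (nth _ (vtab _ _ _) _); lia.
Qed.


Lemma run_bounds (S A : finType) d (Info : measurableType d)
  (rew : Info -> nat -> S -> A -> R) nxt
  (rew01 : forall I t x a, 0 <= rew I t x a <= 1) I pol t x :
  0 <= (run rew nxt I pol t x).1 <= (size pol)%:R.
Proof.
elim: pol t x => [|f pol IH] t x /=; first by rewrite lexx.
have /andP[r0 r1] := rew01 I t x (f x).
have /andP[p0 p1] := IH t.+1 (nxt I t x (f x)).
by apply/andP; split; [rewrite addr_ge0 | rewrite -natr1 addrC lerD].
Qed.

Lemma frakQ_shift (S A : finType) (a0 : A) d (Info : measurableType d)
  (rew : Info -> nat -> S -> A -> R) nxt h s B I (V1 V2 : S -> R) c :
  (forall x, V1 x <= V2 x + c) ->
  frakQ a0 rew nxt h s B I V1 <= frakQ a0 rew nxt h s B I V2 + c.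
Proof.
move=> hV.
have key pol : batch_value rew nxt I h s pol V1 <= batch_value rew nxt I h s pol V2 + c.
  by rewrite /batch_value -addrA lerD2l hV.
rewrite /frakQ; apply: bmax_le.
  by apply: le_trans (key _) _; rewrite lerD2r; exact: idx_le_bmax.
by move=> phi; apply: le_trans (key _) _; rewrite lerD2r; exact: le_bmax.
Qed.

Lemma frakQ_bounds (S A : finType) (a0 : A) d (Info : measurableType d)
  (rew : Info -> nat -> S -> A -> R) nxt
  (rew01 : forall I t x a, 0 <= rew I t x a <= 1) h s B I (V : S -> R) M :
  (forall x, 0 <= V x <= M) ->
  0 <= frakQ a0 rew nxt h s B I V <= B%:R + M.
Proof.
move=> hV.
have key pol : size pol = B -> 0 <= batch_value rew nxt I h s pol V <= B%:R + M.
  move=> sz; rewrite /batch_value.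
  have /andP[p0 p1] := @run_bounds _ _ _ _ rew nxt rew01 I pol h s.
  have /andP[v0 v1] := hV (run rew nxt I pol h s).2.
  by rewrite addr_ge0 //= lerD // -sz.
rewrite /frakQ; apply/andP; split.
  apply: le_trans _ (idx_le_bmax _ _ _).
  by move: (key _ (size_nseq B [ffun=> a0])) => /andP[].
apply: bmax_le; first by move: (key _ (size_nseq B [ffun=> a0])) => /andP[].
by move=> phi; move: (key _ (size_tuple phi)) => /andP[].
Qed.


Section Emp.
Context d (Info : measurableType d).
Implicit Types (xs : seq Info) (f g : Info -> R).

Lemma emp_mean_ext xs f g : (forall x, f x = g x) -> emp_mean xs f = emp_mean xs g.
Proof. by move=> h; rewrite (funext h). Qed.

Lemma emp_meanD xs f g : emp_mean xs (fun x => f x + g x) = emp_mean xs f + emp_mean xs g.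
Proof. by rewrite /emp_mean big_split mulrDl. Qed.

Lemma emp_meanB xs f g : emp_mean xs (fun x => f x - g x) = emp_mean xs f - emp_mean xs g.
Proof. by rewrite /emp_mean big_split sumrN mulrBl. Qed.

Lemma emp_meanZ xs c f : emp_mean xs (fun x => c * f x) = c * emp_mean xs f.
Proof. by rewrite /emp_mean -big_distrr mulrA. Qed.

Lemma emp_mean_le xs f g : (forall x, f x <= g x) -> emp_mean xs f <= emp_mean xs g.
Proof.
move=> h; rewrite /emp_mean ler_wpM2r ?invr_ge0 ?ler0n //.
by apply: ler_sum => i _.
Qed.

Lemma emp_mean_ge0 xs f : (forall x, 0 <= f x) -> 0 <= emp_mean xs f.
Proof.
move=> h; rewrite /emp_mean mulr_ge0 ?invr_ge0 ?ler0n //.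
by apply: sumr_ge0 => i _.
Qed.

Lemma emp_var_ge0 xs f : 0 <= emp_var xs f.
Proof. by apply: emp_mean_ge0 => x; apply: sqr_ge0. Qed.

Lemma emp_var_le_sq xs f : emp_var xs f <= emp_mean xs (fun x => f x ^+ 2).
Proof.
rewrite /emp_var /emp_mean; set m := (\sum_(x <- xs) f x) / _.
set N := (maxn (size xs) 1)%:R.
have N0 : 0 < N by rewrite ltr0n leq_max orbT.
apply: ler_wpM2r; first by rewrite invr_ge0 ltW.
have -> : \sum_(x <- xs) (f x - m) ^+ 2 =
   \sum_(x <- xs) f x ^+ 2 - 2 * m * \sum_(x <- xs) f x + (size xs)%:R * m ^+ 2.
  rewrite (eq_bigr (fun x => f x ^+ 2 + (- (2 * m) * f x + m ^+ 2))); last by move=> x _; ring.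
  rewrite big_split big_split /= -big_distrr big_const_seq count_predT iter_addr_0 -mulr_natl /=; ring.
have hs : \sum_(x <- xs) f x = m * N by rewrite /m mulfVK // gt_eqF.
have hN : (size xs)%:R <= N by rewrite ler_nat leq_maxl.
rewrite hs; have := sqr_ge0 m; nra.
Qed.

Lemma emp_var_sub xs (a b c : Info -> R) : (forall x, a x = b x - c x) ->
  emp_var xs a <= 2 * emp_var xs b + 2 * emp_var xs c.
Proof.
move=> h; rewrite /emp_var -!emp_meanZ -emp_meanD; apply: emp_mean_le => x.
rewrite (@emp_mean_ext xs a (fun x => b x - c x) h) emp_meanB h.
set u := b x - emp_mean xs b; set v := c x - emp_mean xs c.
have -> : b x - c x - (emp_mean xs b - emp_mean xs c) = u - v by rewrite /u /v; ring.
have := sqr_ge0 (u + v); nra.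
Qed.

End Emp.

Lemma alg_core (Q ma m Var eva evb evd L n Hh : R) :
  0 < n -> 0 <= L -> 0 <= Hh -> 0 <= Var -> 0 <= eva -> 0 <= evb -> 0 <= evd -> 0 <= m ->
  `|Q - ma| <= Num.sqrt (2 * Var * L / n) + Hh * L / n ->
  `|Num.sqrt eva - Num.sqrt Var| <= 4 * Hh * Num.sqrt (L / n) ->
  eva <= 2 * evb + 2 * evd -> evd <= Hh * m ->
  Q <= (ma + m) + (Num.sqrt (8 * evb * L / n) + 11 * Hh * L / n).
Proof.
move=> n0 L0 H0 V0 ea0 eb0 ed0 m0 i1 i2 hea hed.
have Ln0 : 0 <= L / n by rewrite divr_ge0 // ltW.
set x := Num.sqrt Var; set y := Num.sqrt eva; set z := Num.sqrt evb.
set w := Num.sqrt evd; set r := Num.sqrt (L / n); pose t := Num.sqrt (2 : R).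
pose p := Num.sqrt (8 : R).
have x0 : 0 <= x := sqrtr_ge0 _. have y0 : 0 <= y := sqrtr_ge0 _.
have z0 : 0 <= z := sqrtr_ge0 _. have w0 : 0 <= w := sqrtr_ge0 _.
have r0 : 0 <= r := sqrtr_ge0 _. have t0 : 0 <= t := sqrtr_ge0 _.
have p0 : 0 <= p := sqrtr_ge0 _.
have x2 : x ^+ 2 = Var by rewrite sqr_sqrtr.
have y2 : y ^+ 2 = eva by rewrite sqr_sqrtr.
have z2 : z ^+ 2 = evb by rewrite sqr_sqrtr.
have w2 : w ^+ 2 = evd by rewrite sqr_sqrtr.
have r2 : r ^+ 2 = L / n by rewrite sqr_sqrtr.
have t2 : t ^+ 2 = 2 by rewrite sqr_sqrtr.
have p2 : p ^+ 2 = 8 by rewrite sqr_sqrtr.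
have ev : Num.sqrt (2 * Var * L / n) = t * x * r.
  by rewrite -!sqrtrM ?mulr_ge0 // -!mulrA.
have eu : Num.sqrt (8 * evb * L / n) = p * z * r.
  by rewrite -!sqrtrM ?mulr_ge0 // -!mulrA.
have eHL : Hh * L / n = Hh * r ^+ 2 by rewrite r2 mulrA.
have e11 : 11 * Hh * L / n = 11 * (Hh * r ^+ 2) by rewrite -eHL !mulrA.
rewrite ev eHL in i1; rewrite eu e11.
rewrite -/r in i2.
have hx : x <= y + 4 * Hh * r.
  move: i2; rewrite -/x -/y ler_norml => /andP[h1 _]; lra.
have hq : Q - ma <= t * x * r + Hh * r ^+ 2 by move: i1; rewrite ler_norml => /andP[_ ->].
have hA : t * y <= 2 * (z + w).
  have h1 : (t * y) ^+ 2 <= (2 * (z + w)) ^+ 2.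
    rewrite exprMn t2 y2.
    have := mulr_ge0 z0 w0; rewrite -z2 -w2 in hea; nra.
  have h3 : 0 <= t * y by rewrite mulr_ge0.
  have h4 : 0 <= 2 * (z + w) by rewrite mulr_ge0 // addr_ge0.
  nra.
have hB : 2 * r * w <= m + Hh * r ^+ 2.
  have h1 : (2 * r * w) ^+ 2 <= (m + Hh * r ^+ 2) ^+ 2.
    have h2 : w ^+ 2 <= Hh * m by rewrite w2.
    have h5 : 0 <= (m - Hh * r ^+ 2) ^+ 2 := sqr_ge0 _.
    have h6 : r ^+ 2 * w ^+ 2 <= r ^+ 2 * (Hh * m) by rewrite ler_wpM2l // sqr_ge0.
    nra.
  have h3 : 0 <= 2 * r * w by rewrite !mulr_ge0.
  have h4 : 0 <= m + Hh * r ^+ 2 by rewrite addr_ge0 // mulr_ge0 // sqr_ge0.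
  nra.
have hC : 2 <= p by nra.
have hD : t <= 3 / 2 by nra.
have e1 : t * x * r <= r * (t * y) + 4 * Hh * r ^+ 2 * t.
  have := ler_wpM2l (mulr_ge0 t0 r0) hx; rewrite expr2; nra.
have e2 : r * (t * y) <= r * (2 * (z + w)) := ler_wpM2l r0 hA.
have e3 : 4 * Hh * r ^+ 2 * t <= 4 * Hh * r ^+ 2 * (3 / 2).
  by apply: ler_wpM2l => //; rewrite !mulr_ge0 // sqr_ge0.
have e4 : z * r * 2 <= z * r * p by apply: ler_wpM2l => //; rewrite mulr_ge0.
nra.
Qed.

End Gen.

Theorem lemma3 (R : realType) (S A : finType) (a0 : A) (d : measure_display)
  (Info : measurableType d)
  (rew : Info -> nat -> S -> A -> R) (nxt : Info -> nat -> S -> A -> S)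
  (rew01 : forall I t x a, 0 <= rew I t x a <= 1)
  (rew_meas : forall t x a, measurable_fun setT (fun I => rew I t x a))
  (nxt_meas : forall t x a y, measurable [set I | nxt I t x a = y])
  (H ell : nat) (ell_ge1 : (1 <= ell)%N)
  (P : nat -> S -> nat -> probability Info R)
  (samp : nat -> nat -> S -> nat -> seq Info)
  (delta : R) (delta01 : 0 < delta < 1)
  (hG1 : G1 a0 rew nxt H ell P samp delta) :
  forall k, (1 <= k)%N ->
  forall h (s : S) B (I : Info), (1 <= h <= H)%N -> (1 <= B <= ellh H ell h)%N ->
    frakQ a0 rew nxt h s B I (Vstar a0 rew nxt H ell P (h + B))
      <= frakQ a0 rew nxt h s B I (Vbar a0 rew nxt H ell samp delta k (h + B))
    /\ Vstar a0 rew nxt H ell P h s <= Vbar a0 rew nxt H ell samp delta k h s.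
Proof.
move=> k k1 h0 s0 B0 I0 hh0 hB0.
set Vs := Vstar a0 rew nxt H ell P.
set Vb := Vbar a0 rew nxt H ell samp delta k.
have hS : (0 < #|S|)%N by apply/card_gt0P; exists s0.
have hL : 0 <= Lk S H ell delta k.
  rewrite /Lk; apply: ln_ge0.
  case/andP: delta01 => d0 d1.
  rewrite ler_pdivlMr // mul1r; apply: le_trans (ltW d1) _.
  apply: (@le_trans _ _ 1%:R) => //; rewrite ler_nat; case/andP: hh0 => h1 h2.
  rewrite !muln_gt0 hS ell_ge1 /= k1 andbT /=; lia.
have base x : Vs H.+1 x = 0 /\ Vb H.+1 x = 0.
  by rewrite /Vs /Vb /Vstar /Vbar !backward_last.
have claim : forall m h, (1 <= h <= H.+1)%N -> (H.+1 - h <= m)%N -> forall x,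
    0 <= Vs h x /\ Vs h x <= Vb h x /\ Vb h x <= (H.+1 - h)%:R.
  elim=> [|m IH] h /andP[h1 h2] hm x.
    have -> : h = H.+1 by lia.
    by have [-> ->] := base x; rewrite subnn lexx.
  have [->|hH] := eqVneq h H.+1.
    by have [-> ->] := base x; rewrite subnn lexx.
  have hhH : (1 <= h <= H)%N by lia.
  have ellhb : (1 <= ellh H ell h)%N by rewrite /ellh; lia.
  have IHB B : (1 <= B <= ellh H ell h)%N -> forall y,
      0 <= Vs (h + B) y /\ Vs (h + B) y <= Vb (h + B) y /\
      Vb (h + B) y <= (H.+1 - (h + B))%:R.
    by move=> hB; apply: IH; rewrite /ellh in hB; lia.
  have eVs : Vs h x = maxB (ellh H ell h) (fun B => Qstar a0 rew nxt H ell P h x B).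
    rewrite /Vs /Vstar backward_unfold //=; apply: maxB_eq => // B hB.
    by rewrite /Qstar backward_tab //; rewrite /ellh in hB; lia.
  have eVb : Vb h x = maxB (ellh H ell h)
      (fun B => Qbar_with a0 rew nxt H ell samp delta k h x B (Vb (h + B))).
    rewrite /Vb /Vbar backward_unfold //=; apply: maxB_eq => // B hB.
    by rewrite backward_tab //; rewrite /ellh in hB; lia.
  have Vbnd B : (1 <= B <= ellh H ell h)%N -> forall y,
      0 <= Vs (h + B) y <= (H.+1 - (h + B))%:R.
    move=> hB y; have [a1 [a2 a3]] := IHB B hB y.
    by rewrite a1 (le_trans a2 a3).
  have Qs_bnd B : (1 <= B <= ellh H ell h)%N ->
      0 <= Qstar a0 rew nxt H ell P h x B <= (H.+1 - h)%:R.
    move=> hB; rewrite /Qstar; apply/andP; split.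
      apply: Expect_ge0 => I.
      by case/andP: (@frakQ_bounds R S A a0 d Info rew nxt rew01 h x B I _ _ (Vbnd B hB)).
    apply: Expect_le => I.
    have /andP[q1 q2] := @frakQ_bounds R S A a0 d Info rew nxt rew01 h x B I _ _ (Vbnd B hB).
    rewrite q1 /=; apply: le_trans q2 _; rewrite -natrD ler_nat.
    by rewrite /ellh in hB; lia.
  have Qle B : (1 <= B <= ellh H ell h)%N ->
      Qstar a0 rew nxt H ell P h x B <=
      Qbar_with a0 rew nxt H ell samp delta k h x B (Vb (h + B)).
    move=> hB; rewrite /Qbar_with le_min; apply/andP; split; last first.
      by case/andP: (Qs_bnd B hB).
    have [i1 i2 _] := hG1 k k1 h x B hhH hB.
    set xs := samp k h x B.
    set fa := fun I => frakQ a0 rew nxt h x B I (Vs (h + B)).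
    set fb := fun I => frakQ a0 rew nxt h x B I (Vb (h + B)).
    set fd := fun I => fb I - fa I.
    have fd0 I : 0 <= fd I.
      rewrite /fd subr_ge0 -[fb I]addr0 /fa /fb; apply: frakQ_shift => y.
      by rewrite addr0; have [_ [a2 _]] := IHB B hB y.
    have fdH I : fd I <= H%:R.
      rewrite /fd lerBlDr addrC; apply: (le_trans (@frakQ_shift R S A a0 d Info rew nxt h x B I _ (Vs (h + B)) (H.+1 - (h + B))%:R _)).
        move=> y; have [a1 [_ a3]] := IHB B hB y.
        by apply: le_trans a3 _; rewrite lerDr.
      rewrite lerD2l ler_nat; by rewrite /ellh in hB; lia.
    have emb : emp_mean xs fb = emp_mean xs fa + emp_mean xs fd.
      by rewrite /fd emp_meanB; ring.
    rewrite emb /bonus; apply: (@alg_core R _ _ _ _ _ _ (emp_var xs fd)) i1 i2 _ _.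
    - by rewrite /nvis ltr0n leq_max orbT.
    - exact: hL.
    - exact: ler0n.
    - by rewrite /Varstar /Variance; apply: Expect_ge0 => I; apply: sqr_ge0.
    - exact: emp_var_ge0.
    - exact: emp_var_ge0.
    - exact: emp_var_ge0.
    - by apply: emp_mean_ge0.
    - by apply: emp_var_sub => I; rewrite /fd /fa /fb /= opprB addrC subrK.
    - apply: le_trans (@emp_var_le_sq R d Info xs fd) _.
      rewrite -emp_meanZ; apply: emp_mean_le => I.
      have := fd0 I; have := fdH I; nra.
  split.
    rewrite eVs; apply: le_trans (@le_maxB R _ _ 1%N _); last by rewrite leqnn ellhb.
    by case/andP: (Qs_bnd 1%N (ltac:(by rewrite leqnn ellhb))).
  split.
    by rewrite eVs eVb; apply: maxB_mono => // B hB; apply: Qle.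
  rewrite eVb; apply: maxB_le => // B hB.
  by rewrite /Qbar_with ge_min lexx orbT.
have hB1 : (1 <= h0 + B0 <= H.+1)%N by move: hB0 hh0; rewrite /ellh; lia.
have [c1 [c2 c3]] := claim (H.+1 - h0)%N h0 ltac:(move: hh0; lia) (leqnn _) s0.
split; last exact: c2.
rewrite -[X in _ <= X]addr0; apply: frakQ_shift => y.
have [_ [e2 _]] := claim (H.+1 - (h0 + B0))%N (h0 + B0)%N hB1 (leqnn _) y.
by rewrite addr0.
Qed.
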